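(* Let $(\varphi_n(x))_{n\in\mathbb{N}}$ be a symplectic basis. Then for every symplectic power series $\varphi(x)$ there exists a unique sequence $(a_n)_{n\in\mathbb{N}}$ of complex numbers such that for each $k\ge0$, $\varphi(x)-\sum_{i=0}^k a_i\varphi_i(x)\in\mathfrak m^{2k+2}$. Consequently $\varphi(x)=\sum_{i\ge0}a_i\varphi_i(x)$, the sum converging in the $\mathfrak m$-adic topology of $\mathbb{C}[[x]]$.
   Context: A formal power series $\varphi(x)=\sum_{i\ge0}\gamma_i x^i\in\mathbb{C}[[x]]$ is called symplectic if for every $m\ge1$ one has $\sum_{k=0}^{m-1}(-1)^k\binom{m-1}{k}\gamma_{m+k}=0$. Let $\mathfrak m=x\,\mathbb{C}[[x]]$ be the maximal ideal of $\mathbb{C}[[x]]$. A symplectic basis is a sequence $(\varphi_n(x))_{n\in\mathbb{N}}$ of symplectic power series such that each $\varphi_n(x)\in\mathfrak m^{2n}$ and its class in $\mathfrak m^{2n}/\mathfrak m^{2n+1}$ is nonzero. *)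

(* Defs.v *)
From mathcomp Require Import all_boot all_order all_algebra.
From mathcomp Require Import complex.
From mathcomp Require Import reals.
Set Implicit Arguments. Unset Strict Implicit. Unset Printing Implicit Defensive.
Import GRing.Theory Num.Theory.
Local Open Scope ring_scope.

Definition Cplx (R : realType) := R[i].

(* A formal power series in C[[x]] is represented by its coefficient
   sequence gamma : nat -> C, i.e. phi(x) = sum_i gamma i x^i. *)
Definition fps (R : realType) := nat -> Cplx R.

Definition symplectic (R : realType) (phi : fps R) : Prop :=
  forall m : nat, (1 <= m)%N ->
    \sum_(0 <= k < m) (-1) ^+ k * ('C(m.-1, k))%:R * phi (m + k)%N = 0.

(* phi belongs to m^n (m = x C[[x]]): all coefficients of degree < n vanish. *)
Definition in_mpow (R : realType) (n : nat) (phi : fps R) : Prop :=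
  forall j : nat, (j < n)%N -> phi j = 0.

(* Symplectic basis: each phi_n symplectic, phi_n in m^{2n},
   and its class in m^{2n}/m^{2n+1} nonzero (coefficient of x^{2n} nonzero). *)
Definition symplectic_basis (R : realType) (phis : nat -> fps R) : Prop :=
  forall n : nat, [/\ symplectic (phis n), in_mpow n.*2 (phis n)
                    & phis n n.*2 != 0].

Definition residual (R : realType) (phi : fps R) (phis : nat -> fps R)
  (a : nat -> Cplx R) (k : nat) : fps R :=
  fun j => phi j - \sum_(0 <= i < k.+1) a i * phis i j.

(* Main.v *)
Require Import Defs.
From mathcomp Require Import all_boot all_order all_algebra.
From mathcomp Require Import complex reals.
From Stdlib Require Import FunctionalExtensionality.
Set Implicit Arguments. Unset Strict Implicit. Unset Printing Implicit Defensive.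
Import GRing.Theory Num.Theory.
Local Open Scope ring_scope.

Section S.
Variable R : realType.
Implicit Types (phi psi : fps R).

Lemma sympl_odd (psi : fps R) k : symplectic psi ->
  (forall j, (j < k.*2.+1)%N -> psi j = 0) -> psi k.*2.+1 = 0.
Proof.
move=> Hs Hz; have := Hs k.+1 isT; rewrite big_nat_recr //= big1_seq ?add0r.
  rewrite binn mulr1 addSn addnn => /eqP; rewrite mulf_eq0 signr_eq0 /=.
  by move/eqP.
move=> i /andP [_]; rewrite mem_index_iota => /andP [_ Hi].
by rewrite Hz ?mulr0 // addSn ltnS -addnn ltn_add2l.
Qed.

Lemma sympl_lin phis (a : nat -> Cplx R) phi n :
  (forall i, symplectic (phis i)) -> symplectic phi ->
  symplectic (fun j => phi j - \sum_(0 <= i < n) a i * phis i j).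
Proof.
move=> Hp Hs m Hm.
under eq_bigr => k _ do rewrite mulrBr.
rewrite sumrB (Hs m Hm) sub0r.
under eq_bigr => k _ do rewrite mulr_sumr.
rewrite exchange_big /= big1 ?oppr0 // => i _.
have := Hp i m Hm => H.
under eq_bigr => k _ do rewrite mulrCA.
by rewrite -mulr_sumr H mulr0.
Qed.

Variable phis : nat -> fps R.
Variable phi : fps R.

Definition cc n (l : seq (Cplx R)) : Cplx R :=
  (phi n.*2 - \sum_(0 <= i < n) l`_i * phis i n.*2) / phis n n.*2.

Fixpoint alist n : seq (Cplx R) :=
  if n is n'.+1 then rcons (alist n') (cc n' (alist n')) else [::].

Lemma size_alist n : size (alist n) = n.
Proof. by elim: n => //= n IH; rewrite size_rcons IH. Qed.

Lemma nth_alist n i : (i < n)%N -> (alist n)`_i = (alist i.+1)`_i.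
Proof.
elim: n => // n IH; rewrite ltnS leq_eqVlt => /orP [/eqP ->|Hi] //.
by rewrite /= nth_rcons size_alist Hi IH.
Qed.

Definition aa k := (alist k.+1)`_k.

Lemma aa_eq k : aa k =
  (phi k.*2 - \sum_(0 <= i < k) aa i * phis i k.*2) / phis k k.*2.
Proof.
rewrite /aa /= nth_rcons size_alist ltnn eqxx /cc; congr ((_ - _) / _).
by apply: eq_big_nat => i /andP [_ Hi]; rewrite nth_alist.
Qed.

End S.

Theorem lemma2p3 (R : realType) (phis : nat -> fps R) :
  symplectic_basis phis ->
  forall phi : fps R, symplectic phi ->
    exists! a : nat -> Cplx R,
      (forall k : nat, in_mpow (k.*2 + 2) (residual phi phis a k)) /\
      (* consequently: the partial sums converge m-adically to phi *)
      (forall N : nat, exists K : nat, forall k : nat, (K <= k)%N ->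
         in_mpow N (residual phi phis a k)).
Proof.
move=> Hb phi Hs.
have Hp i : symplectic (phis i) by case: (Hb i).
have Hz i j : (j < i.*2)%N -> phis i j = 0 by case: (Hb i) => _ H _; apply: H.
have Hnz i : phis i i.*2 != 0 by case: (Hb i).
pose a := aa phis phi.
have main k : forall j, (j < k.*2)%N ->
    phi j - \sum_(0 <= i < k) a i * phis i j = 0.
  elim: k => [//|k IH].
  have H1 j : (j < k.*2.+1)%N -> phi j - \sum_(0 <= i < k.+1) a i * phis i j = 0.
    rewrite big_nat_recr //= opprD addrA ltnS leq_eqVlt => /orP [/eqP ->|Hj].
      by rewrite /a aa_eq -/a divfK // subrr.
    by rewrite IH // Hz // mulr0 subr0.
  move=> j; rewrite doubleS ltnS leq_eqVlt => /orP [/eqP ->|]; last exact: H1.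
  apply: (@sympl_odd R (fun j => phi j - \sum_(0 <= i < k.+1) a i * phis i j)) => //.
  exact: sympl_lin.
have res k : in_mpow (k.*2 + 2) (residual phi phis a k).
  by move=> j Hj; apply: main; rewrite doubleS; rewrite addn2 in Hj.
exists a; split.
  split => // N; exists N => k Hk j Hj; apply: res.
  by apply: (leq_trans Hj); apply: (leq_trans Hk); rewrite -addnn -addnA leq_addr.
move=> b [Hb1 _]; apply: functional_extensionality => k.
elim/ltn_ind: k => k IH.
have E1 := res k k.*2; have E2 := Hb1 k k.*2.
rewrite /residual in E1 E2.
have L : (k.*2 < k.*2 + 2)%N by rewrite addn2.
move: (E1 L) (E2 L); rewrite !big_nat_recr //=.
have -> : \sum_(0 <= i < k) b i * phis i k.*2 = \sum_(0 <= i < k) a i * phis i k.*2.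
  by apply: eq_big_nat => i /andP [_ Hi]; rewrite IH.
set S := \sum_(0 <= i < k) _.
move=> e1 e2; apply/eqP; rewrite -subr_eq0.
have : (a k - b k) * phis k k.*2 = 0.
  move/eqP: e1; move/eqP: e2; rewrite !subr_eq0 => /eqP e2 /eqP e1.
  have E : S + a k * phis k k.*2 = S + b k * phis k k.*2 by rewrite -e1 -e2.
  by move/addrI: E => E; rewrite mulrBl E subrr.
move=> H; apply/eqP; apply: (mulIf (Hnz k)); by rewrite H mul0r.
Qed.
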